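(* In $Y_R(\mathfrak{so}_3)$, writing $e_{-1,0}(u)=\sum_{r\ge1}e^{(r)}_{-1,0}u^{-r}$, $$e_{-1,1}(u)=[e^{(1)}_{-1,0},e_{-1,0}(u)]-e_{-1,0}(u)^2.$$
   Context: Let $e_{ij}$ ($i,j\in\{-1,0,1\}$) be the matrix units of $\mathrm{End}\,\mathbb{C}^3$, with rows and columns indexed by $-1,0,1$. Let $P=\sum_{i,j}e_{ij}\otimes e_{ji}$, $Q=\sum_{i,j}e_{ij}\otimes e_{-i,-j}$ and $R(u)=1-\frac{P}{u}+\frac{Q}{u-\frac12}$. Let $t$ be the transposition on $\mathrm{End}\,\mathbb{C}^3$ given by $(e_{ij})^t=e_{-j,-i}$. The algebra $Y_R(\mathfrak{so}_3)$ is the unital associative algebra over $\mathbb{C}$ generated by elements $t_{ij}^{(r)}$, $r\ge 1$, $i,j\in\{-1,0,1\}$; put $t_{ij}(u)=\delta_{ij}+\sum_{r\ge1}t^{(r)}_{ij}u^{-r}$, $T(u)=\sum_{i,j}t_{ij}(u)\otimes e_{ij}$, $T^t(u)=\sum_{i,j}t_{ij}(u)\otimes e_{-j,-i}$, $T_1(u)=\sum t_{ij}(u)\otimes e_{ij}\otimes 1$, $T_2(v)=\sum t_{ij}(v)\otimes 1\otimes e_{ij}$. The defining relations are $R(u-v)T_1(u)T_2(v)=T_2(v)T_1(u)R(u-v)$ and $T(u)T^t(u+\frac12)=T^t(u+\frac12)T(u)=1$. The Gauss generators are the unique series $k_i(u)\in 1+u^{-1}Y_R(\mathfrak{so}_3)[[u^{-1}]]$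 ($i=-1,0,1$) and $e_{ij}(u),f_{ji}(u)\in u^{-1}Y_R(\mathfrak{so}_3)[[u^{-1}]]$ ($-1\le i<j\le1$) such that $T(u)=F(u)K(u)E(u)$, where $F(u)$ is the lower unitriangular matrix with below-diagonal entries $F_{0,-1}=f_{0,-1}(u)$, $F_{1,-1}=f_{1,-1}(u)$, $F_{1,0}=f_{1,0}(u)$, $K(u)=\mathrm{diag}(k_{-1}(u),k_0(u),k_1(u))$, and $E(u)$ is the upper unitriangular matrix with above-diagonal entries $E_{-1,0}=e_{-1,0}(u)$, $E_{-1,1}=e_{-1,1}(u)$, $E_{0,1}=e_{01}(u)$ (rows/columns indexed by $-1,0,1$). *)

(* Defs.v *)
From HB Require Import structures.
From mathcomp Require Import all_boot all_order all_algebra.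
Set Implicit Arguments. Unset Strict Implicit. Unset Printing Implicit Defensive.
Import Order.TTheory GRing.Theory Num.Theory.
Local Open Scope ring_scope.

(* Index set {-1,0,1} is encoded as 'I_3 via k |-> k-1, so the natural
   order on 'I_3 is the order -1 < 0 < 1 and  -i  is rev_ord i. *)
Definition im1 : 'I_3 := @Ordinal 3 0 isT.
Definition i0  : 'I_3 := @Ordinal 3 1 isT.
Definition ip1 : 'I_3 := @Ordinal 3 2 isT.
Definition ineg (i : 'I_3) : 'I_3 := rev_ord i.

Section Defs.
Variables (F : numFieldType) (A : lalgType F).

(* Formal power series in u^{-1}: s n = coefficient of u^{-n}. *)
Definition ser := nat -> A.

Definition sconv (x y : ser) : ser :=
  fun n => \sum_(i < n.+1) x i * y (n - i)%N.

Definition halfF : F := 2^-1.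

(* s(u) |-> s(u + 1/2), re-expanded in u^{-1}:
   (u+1/2)^{-r} = sum_k (-1/2)^k binom(r+k-1,k) u^{-r-k}. *)
Definition shiftHalf (s : ser) : ser :=
  fun n => if n is 0 then s 0%N else
    \sum_(1 <= r < n.+1) (((- halfF) ^+ (n - r) * ('C(n.-1, n - r))%:R) *: s r).

Definition Tser (t : 'I_3 -> 'I_3 -> nat -> A) (i j : 'I_3) : ser :=
  fun n => if n is 0 then (i == j)%:R else t i j n.

(* Series in two variables u^{-1}, v^{-1}, with finitely many extra
   positive powers allowed: X m n = coefficient of u^{-m} v^{-n}. *)
Definition biser := int -> int -> A.

(* multiplication by (u - v) *)
Definition mul_uv (X : biser) : biser :=
  fun m n => X (m + 1)%R n - X m (n + 1)%R.

(* x(u) y(v) and y(v) x(u) *)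
Definition prodUV (x y : ser) : biser :=
  fun m n => if (0 <= m) && (0 <= n) then x `|m|%N * y `|n|%N else 0.
Definition prodVU (y x : ser) : biser :=
  fun m n => if (0 <= m) && (0 <= n) then y `|n|%N * x `|m|%N else 0.

(* The (e_xy (x) e_zw)-entry of  Rt(u,v) = (u-v)(u-v-1/2) R(u-v)
   = (u-v)(u-v-1/2) 1 - (u-v-1/2) P + (u-v) Q,  acting (by scalar
   multiplication) on a two-variable series X. *)
Definition Rop (x y z w : 'I_3) (X : biser) : biser :=
  fun m n =>
    (if (x == y) && (z == w) then
       mul_uv (mul_uv X) m n - halfF *: mul_uv X m n else 0)
  - (if (x == w) && (y == z) then mul_uv X m n - halfF *: X m n else 0)
  + (if (z == ineg x) && (w == ineg y) then mul_uv X m n else 0).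

(* RTT relation R(u-v)T1(u)T2(v) = T2(v)T1(u)R(u-v), cleared of
   denominators, compared entrywise (e_ab (x) e_cd) and coefficientwise. *)
Definition RTT_rel (t : 'I_3 -> 'I_3 -> nat -> A) : Prop :=
  forall (a b c d : 'I_3) (m n : int),
    \sum_(j < 3) \sum_(l < 3) Rop a j c l (prodUV (Tser t j b) (Tser t l d)) m n
  = \sum_(j < 3) \sum_(l < 3) Rop j b l d (prodVU (Tser t c l) (Tser t a j)) m n.

(* T(u) T^t(u+1/2) = T^t(u+1/2) T(u) = 1, where (T^t)_{ab} = t_{-b,-a}. *)
Definition unitary_rel (t : 'I_3 -> 'I_3 -> nat -> A) : Prop :=
  forall (a b : 'I_3) (n : nat),
    \sum_(c < 3) sconv (Tser t a c) (shiftHalf (Tser t (ineg b) (ineg c))) n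
      = ((a == b) && (n == 0%N))%:R
 /\ \sum_(c < 3) sconv (shiftHalf (Tser t (ineg c) (ineg a))) (Tser t c b) n
      = ((a == b) && (n == 0%N))%:R.

Definition Fmat (f : 'I_3 -> 'I_3 -> ser) (a c : 'I_3) : ser :=
  fun n => if a == c then (n == 0%N)%:R else if (c < a)%N then f a c n else 0.
Definition Emat (e : 'I_3 -> 'I_3 -> ser) (c b : 'I_3) : ser :=
  fun n => if c == b then (n == 0%N)%:R else if (c < b)%N then e c b n else 0.

(* Gauss decomposition T(u) = F(u) K(u) E(u), with k_i in 1 + u^{-1}A[[u^{-1}]]
   and e_ij, f_ji in u^{-1}A[[u^{-1}]] for i < j. *)
Definition gauss (t : 'I_3 -> 'I_3 -> nat -> A) (k : 'I_3 -> ser)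
    (e f : 'I_3 -> 'I_3 -> ser) : Prop :=
  (forall i, k i 0%N = 1)
  /\ (forall i j : 'I_3, (i < j)%N -> e i j 0%N = 0 /\ f j i 0%N = 0)
  /\ (forall (a b : 'I_3) (n : nat),
        Tser t a b n = \sum_(c < 3) sconv (sconv (Fmat f a c) (k c)) (Emat e c b) n).

End Defs.

(* Main.v *)
Require Import Defs.
From HB Require Import structures.
From mathcomp Require Import all_boot all_order all_algebra.
Import Order.TTheory GRing.Theory Num.Theory.
Local Open Scope ring_scope.
Set Implicit Arguments. Unset Strict Implicit.

Lemma sum3 (V : nmodType) (G : 'I_3 -> V) : \sum_(j < 3) G j = G im1 + G i0 + G ip1.
Proof.
rewrite !big_ord_recr big_ord0 /= add0r.
by congr (_ + _ + _); apply: f_equal; apply: val_inj.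
Qed.

Section S.
Variables (F : numFieldType) (A : lalgType F).
Implicit Types (X : biser A) (x y z : ser A).
Lemma muv1 X m : mul_uv X m (-1) = X (m+1) (-1) - X m 0.
Proof. by []. Qed.
Lemma muv0 X m : mul_uv X m 0 = X (m+1) 0 - X m 1.
Proof. by []. Qed.
Lemma pUV1 x y m : prodUV x y m (-1) = 0.
Proof. by rewrite /prodUV andbF. Qed.
Lemma pVU1 x y m : prodVU x y m (-1) = 0.
Proof. by rewrite /prodVU andbF. Qed.
Lemma pUVN x y (N : nat) (j : nat) : prodUV x y (Posz N) (Posz j) = x N * y j.
Proof. by []. Qed.
Lemma pVUN x y (N : nat) (j : nat) : prodVU x y (Posz N) (Posz j) = x j * y N.
Proof. by []. Qed.
Lemma addN1 (N : nat) : Posz N + 1 = Posz N.+1.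
Proof. by rewrite -addn1 PoszD. Qed.

Lemma sconvE x y n : sconv x y n = \sum_(i < n.+1) x i * y (n - i)%N.
Proof. by []. Qed.

Lemma sconv_rev x y i : sconv x y i = \sum_(j < i.+1) x (i - j)%N * y j.
Proof.
rewrite sconvE (reindex_inj rev_ord_inj) /=.
by apply: eq_bigr => j _; rewrite (sub_ordK j).
Qed.

Lemma sconvA x y z i : sconv x (sconv y z) i = sconv (sconv x y) z i.
Proof.
rewrite sconvE sconv_rev.
pose coef3 j k := x j * (y (i - j - k)%N * z k).
transitivity (\sum_(j < i.+1) \sum_(k < i.+1 | (k <= i - j)%N) coef3 j k).
  apply: eq_bigr => /= j _; rewrite sconv_rev big_distrr /=.
  by rewrite (big_ord_narrow_leq (leq_subr _ _)).
rewrite (exchange_big_dep predT) //=; apply: eq_bigr => k _.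
transitivity (\sum_(j < i.+1 | (j <= i - k)%N) coef3 j k).
  apply: eq_bigl => j; rewrite -ltnS -(ltnS j) -!subSn ?leq_ord //.
  by rewrite -subn_gt0 -(subn_gt0 j) -!subnDA addnC.
rewrite (big_ord_narrow_leq (leq_subr _ _)) sconvE big_distrl /=.
by apply: eq_bigr => j _; rewrite /coef3 -!subnDA addnC mulrA.
Qed.

Lemma sconv_ext x x' y y' n : (forall m, x m = x' m) -> (forall m, y m = y' m) ->
  sconv x y n = sconv x' y' n.
Proof. by move=> hx hy; rewrite !sconvE; apply: eq_bigr => i _; rewrite hx hy. Qed.

Lemma sconv_d1 x n : sconv (fun m => (m == 0%N)%:R : A) x n = x n.
Proof.
rewrite sconvE big_ord_recl /= mul1r subn0 big1 ?addr0 // => i _.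
by rewrite mul0r.
Qed.

Lemma sconv_d1r x n : sconv x (fun m => (m == 0%N)%:R : A) n = x n.
Proof.
rewrite sconv_rev big_ord_recl /= mulr1 subn0 big1 ?addr0 // => i _.
by rewrite mulr0.
Qed.

Lemma sconv_0l y n : sconv (fun _ => 0 : A) y n = 0.
Proof. by rewrite sconvE big1 // => i _; rewrite mul0r. Qed.

Lemma sconv_unique (K a b : ser A) n : K 0%N = 1 -> (forall N, sconv K a N = sconv K b N) ->
  a n = b n.
Proof.
move=> K0 H; elim/ltn_ind: n => n IH.
have := H n; rewrite !sconvE !big_ord_recl K0 !mul1r !subn0.
have -> : \sum_(i < n) K (bump 0 i) * a (n - bump 0 i)%N
        = \sum_(i < n) K (bump 0 i) * b (n - bump 0 i)%N.
  apply: eq_bigr => i _; rewrite IH //.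
  have := ltn_ord i; rewrite /bump /=; case: n {IH} i => [|n] i //= _.
  by rewrite subSS ltnS leq_subr.
by move/addIr.
Qed.

Variable (t : 'I_3 -> 'I_3 -> nat -> A).

Lemma T0 a b : Tser t a b 0 = (a == b)%:R.
Proof. by []. Qed.

Lemma rel1 (N : nat) : RTT_rel t ->
  Tser t im1 ip1 N = t im1 i0 1 * Tser t im1 i0 N - Tser t im1 i0 N * t im1 i0 1.
Proof.
move=> H; have := H im1 i0 im1 i0 (Posz N) (-1).
rewrite !sum3 /Rop /=.
rewrite !muv1 !muv0 !pUV1 !pVU1 !addN1 !pUVN !pVUN.
rewrite !T0 /= ?mulr0 ?mul0r ?mulr1 ?mul1r ?scaler0 ?subr0 ?sub0r ?addr0 ?add0r ?opprK.
rewrite !scaler0 !subr0 => h.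
by rewrite h opprB addrCA subrr addr0.
Qed.

Lemma rel2 (N : nat) : RTT_rel t ->
  t im1 i0 1 * Tser t im1 im1 N - Tser t im1 im1 N * t im1 i0 1 = - Tser t im1 i0 N.
Proof.
move=> H; have := H im1 im1 im1 i0 (Posz N) (-1).
rewrite !sum3 /Rop /=.
rewrite !muv1 !muv0 !pUV1 !pVU1 !addN1 !pUVN !pVUN.
rewrite !T0 /= ?mulr0 ?mul0r ?mulr1 ?mul1r ?scaler0 ?subr0 ?sub0r ?addr0 ?add0r ?opprK.
rewrite !scaler0 !subr0 => h.
by rewrite h opprD addrA subrr add0r.
Qed.


Lemma gauss_row (k : 'I_3 -> ser A) (e f : 'I_3 -> 'I_3 -> ser A) b n :
  gauss t k e f -> Tser t im1 b n = sconv (k im1) (Emat e im1 b) n.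
Proof.
case=> _ [_ G]; rewrite G sum3.
have Z c : c != im1 -> sconv (sconv (Fmat f im1 c) (k c)) (Emat e c b) n = 0.
  move=> hc; rewrite (@sconv_ext _ (fun _ => 0) _ (Emat e c b)) ?sconv_0l // => m.
  rewrite (@sconv_ext _ (fun _ => 0) _ (k c)) ?sconv_0l // => j.
  by rewrite /Fmat eq_sym (negbTE hc) ltn0.
rewrite (Z i0) // (Z ip1) // !addr0; apply: sconv_ext => // m.
rewrite -(sconv_d1 (k im1) m); apply: sconv_ext => // j.
Qed.
End S.

Theorem lemma3p9 (F : numFieldType) (A : lalgType F)
    (t : 'I_3 -> 'I_3 -> nat -> A) (k : 'I_3 -> nat -> A)
    (e f : 'I_3 -> 'I_3 -> nat -> A) :
  RTT_rel t -> unitary_rel t -> gauss t k e f ->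
  forall n : nat,
    e im1 ip1 n
    = e im1 i0 1%N * e im1 i0 n - e im1 i0 n * e im1 i0 1%N
      - sconv (e im1 i0) (e im1 i0) n.
Proof.
move=> HR _ HG n.
set K := k im1; set E := e im1 i0; set G := e im1 ip1.
have K0 : K 0%N = 1 by case: HG => H _; exact: H.
have [E0 _] : E 0%N = 0 /\ f i0 im1 0%N = 0 by case: HG => _ [H _]; exact: (H im1 i0 isT).
have hx N : Tser t im1 im1 N = K N.
  rewrite (gauss_row _ _ HG) -(@sconv_d1r _ _ K N); exact: sconv_ext.
have hy N : Tser t im1 i0 N = sconv K E N.
  rewrite (gauss_row _ _ HG); exact: sconv_ext.
have hz N : Tser t im1 ip1 N = sconv K G N.
  rewrite (gauss_row _ _ HG); exact: sconv_ext.
have E1 : t im1 i0 1%N = E 1%N.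
  have -> : t im1 i0 1%N = Tser t im1 i0 1 by [].
  by rewrite hy sconvE !big_ord_recl big_ord0 /= K0 E0 mulr0 mul1r !addr0.
have R1 N : sconv K G N = E 1%N * sconv K E N - sconv K E N * E 1%N.
  by rewrite -hz (rel1 N HR) hy E1.
have R2 N : E 1%N * K N - K N * E 1%N = - sconv K E N.
  by rewrite -hx -hy -E1 (rel2 N HR).
apply: (@sconv_unique _ _ K G (fun m => E 1%N * E m - E m * E 1%N - sconv E E m) n K0) => N.
rewrite R1 [RHS]sconvE.
rewrite (eq_bigr (fun i : 'I_N.+1 => K i * (E 1%N * E (N-i)%N - E (N-i)%N * E 1%N)
   - K i * sconv E E (N-i)%N)); last by move=> i _; rewrite mulrBr.
rewrite sumrB -[X in _ = _ - X]sconvE sconvA.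
rewrite [sconv K E N]sconvE [sconv (sconv K E) E N]sconvE mulr_sumr mulr_suml.
rewrite -!sumrB; apply: eq_bigr => i _.
rewrite -[sconv K E i]opprK -R2 mulNr opprK mulrBl mulrBr !mulrA.
by rewrite [RHS]addrC [RHS]addrA subrK.
Qed.
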